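(* Let $\sigma\in\{1,-1\}$, $n\ge 2$, $m_1,\dots,m_n>0$, $M=\sum_{j=1}^n m_j$, and let $q_k(t)=p(t+k)$, $k=1,\dots,n$, be an equally spaced choreographic solution, with $p$ of period $n$, of $$\ddot q_k=\sum_{j=1,\,j\neq k}^{n}\frac{m_j\big(q_j-\sigma(q_k\odot q_j)q_k\big)}{\big(\sigma-\sigma(q_k\odot q_j)^2\big)^{3/2}}-\sigma(\dot q_k\odot\dot q_k)q_k,\qquad k\in\{1,\dots,n\}.$$ Then for all $k\in\{1,\dots,n\}$ and all $t$, $$0=\sum_{j=1}^{n-1}\frac{\left(m_{j+k}-\frac Mn\right)\Big(p(t+j)-\sigma\big(p(t+j)\odot p(t)\big)p(t)\Big)}{\Big(\sigma-\sigma\big(p(t+j)\odot p(t)\big)^2\Big)^{3/2}}.$$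
   Context: $\mathbb{M}^2_\sigma=\{(x_1,x_2,x_3)\in\mathbb{R}^3: x_1^2+x_2^2+\sigma x_3^2=\sigma\}$ and $x\odot y=x_1y_1+x_2y_2+\sigma x_3y_3$; $p:\mathbb{R}\to\mathbb{M}^2_\sigma$ is twice continuously differentiable. Masses are indexed cyclically: $m_{k+Kn}=m_k$ for $k\in\{1,\dots,n\}$, $K\in\mathbb{Z}$. (Equal spacing has been normalized so that $h_{k+1}-h_k=1$ and the period of $p$ is $n$.) *)

(* Defs.v *)
From Stdlib Require Import Reals List Arith.
From Coquelicot Require Import Coquelicot.
Import ListNotations.
Open Scope R_scope.

Definition V3 : Type := (R * R * R)%type.
Definition c1 (x : V3) : R := fst (fst x).
Definition c2 (x : V3) : R := snd (fst x).
Definition c3 (x : V3) : R := snd x.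
Definition vmk (a b c : R) : V3 := (a, b, c).
Definition vzero : V3 := vmk 0 0 0.
Definition vadd (x y : V3) : V3 := vmk (c1 x + c1 y) (c2 x + c2 y) (c3 x + c3 y).
Definition vscale (a : R) (x : V3) : V3 := vmk (a * c1 x) (a * c2 x) (a * c3 x).
Definition vsub (x y : V3) : V3 := vadd x (vscale (-1) y).

Definition odot (sigma : R) (x y : V3) : R :=
  c1 x * c1 y + c2 x * c2 y + sigma * c3 x * c3 y.

Definition on_M2 (sigma : R) (x : V3) : Prop :=
  c1 x ^ 2 + c2 x ^ 2 + sigma * c3 x ^ 2 = sigma.

(* \sum_{j = lo}^{lo+cnt-1} f j, for vectors and reals *)
Definition vsum (f : nat -> V3) (lo cnt : nat) : V3 :=
  fold_right (fun j acc => vadd (f j) acc) vzero (seq lo cnt).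
Definition rsum (f : nat -> R) (lo cnt : nat) : R :=
  fold_right (fun j acc => f j + acc) 0 (seq lo cnt).

Definition C2_scalar (f : R -> R) : Prop :=
  (forall t, ex_derive f t) /\
  (forall t, ex_derive (Derive f) t) /\
  (forall t, continuous (Derive (Derive f)) t).
Definition C2_curve (p : R -> V3) : Prop :=
  C2_scalar (fun s => c1 (p s)) /\ C2_scalar (fun s => c2 (p s)) /\
  C2_scalar (fun s => c3 (p s)).

Definition vel (q : R -> V3) (t : R) : V3 :=
  vmk (Derive (fun s => c1 (q s)) t) (Derive (fun s => c2 (q s)) t)
      (Derive (fun s => c3 (q s)) t).
Definition acc (q : R -> V3) (t : R) : V3 :=
  vmk (Derive (Derive (fun s => c1 (q s))) t)
      (Derive (Derive (fun s => c2 (q s))) t)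
      (Derive (Derive (fun s => c3 (q s))) t).

(* the denominator  σ - σ (x ⊙ y)^2  (it is >= 0 on M^2_σ) *)
Definition den (sigma : R) (x y : V3) : R := sigma - sigma * (odot sigma x y) ^ 2.

Definition force (sigma : R) (x y : V3) : V3 :=
  vscale (/ (sqrt (den sigma x y)) ^ 3)
         (vsub y (vscale (sigma * odot sigma x y) x)).

Definition qk (p : R -> V3) (k : nat) : R -> V3 := fun t => p (t + INR k).

Definition is_solution (sigma : R) (n : nat) (m : nat -> R) (p : R -> V3) : Prop :=
  forall k, (1 <= k <= n)%nat -> forall t,
    acc (qk p k) t =
    vsub (vsum (fun j => if Nat.eqb j k then vzero
                         else vscale (m j) (force sigma (qk p k t) (qk p j t))) 1 n)
         (vscale (sigma * odot sigma (vel (qk p k) t) (vel (qk p k) t)) (qk p k t)).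

(* Main.v *)
Require Import Defs.
From Stdlib Require Import Reals List Arith Lia Lra.
From Coquelicot Require Import Coquelicot.
Import Defs.
Open Scope R_scope.

Lemma Derive_shift (f : R -> R) (a x : R) :
  Derive (fun s => f (s + a)) x = Derive f (x + a).
Proof.
  unfold Derive. f_equal. apply Lim_ext. intro h.
  replace (x + h + a) with (x + a + h) by ring. reflexivity.
Qed.

Lemma Derive2_shift (f : R -> R) (a x : R) :
  Derive (Derive (fun s => f (s + a))) x = Derive (Derive f) (x + a).
Proof.
  rewrite (Derive_ext (Derive (fun s => f (s + a))) (fun s => Derive f (s + a))).
  - apply Derive_shift.
  - intro; apply Derive_shift.
Qed.

Lemma acc_shift p a t : acc (fun s => p (s + a)) t = acc p (t + a).
Proof. unfold acc. rewrite !(Derive2_shift (fun s => _ (p s))). reflexivity. Qed.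

Lemma vel_shift p a t : vel (fun s => p (s + a)) t = vel p (t + a).
Proof. unfold vel. rewrite !(Derive_shift (fun s => _ (p s))). reflexivity. Qed.

Lemma rsum_S f lo cnt : rsum f lo (S cnt) = f lo + rsum f (S lo) cnt.
Proof. reflexivity. Qed.

Lemma rsum_ext f g lo cnt :
  (forall j, (lo <= j < lo + cnt)%nat -> f j = g j) -> rsum f lo cnt = rsum g lo cnt.
Proof.
  revert lo; induction cnt; intros lo H; [reflexivity|].
  rewrite !rsum_S. rewrite H by lia. rewrite IHcnt; [reflexivity|].
  intros; apply H; lia.
Qed.

Lemma rsum_app f lo a b : rsum f lo (a + b) = rsum f lo a + rsum f (lo + a) b.
Proof.
  revert lo; induction a; intros lo.
  - simpl. rewrite Nat.add_0_r. unfold rsum at 2. simpl. ring.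
  - change (S a + b)%nat with (S (a + b)). rewrite !rsum_S, IHa. replace (S lo + a)%nat with (lo + S a)%nat by lia. ring.
Qed.

Lemma rsum_plus f g lo cnt : rsum (fun j => f j + g j) lo cnt = rsum f lo cnt + rsum g lo cnt.
Proof.
  revert lo; induction cnt; intros lo; [unfold rsum; simpl; ring|].
  rewrite !rsum_S, IHcnt. ring.
Qed.

Lemma rsum_scal c f lo cnt : rsum (fun j => c * f j) lo cnt = c * rsum f lo cnt.
Proof.
  revert lo; induction cnt; intros lo; [unfold rsum; simpl; ring|].
  rewrite !rsum_S, IHcnt. ring.
Qed.

Lemma rsum_scalr c f lo cnt : rsum (fun j => f j * c) lo cnt = rsum f lo cnt * c.
Proof.
  rewrite <- (Rmult_comm c), <- rsum_scal. apply rsum_ext; intros; ring.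
Qed.

Lemma rsum_const c lo cnt : rsum (fun _ => c) lo cnt = INR cnt * c.
Proof.
  revert lo; induction cnt; intros lo; [unfold rsum; simpl; ring|].
  rewrite !rsum_S, IHcnt, S_INR. ring.
Qed.

Lemma rsum_swap (g : nat -> nat -> R) a b c d :
  rsum (fun k => rsum (fun i => g k i) a b) c d = rsum (fun i => rsum (fun k => g k i) c d) a b.
Proof.
  revert c; induction d; intros c.
  - rewrite (rsum_ext (fun i => rsum (fun k => g k i) c 0) (fun _ => 0)) by reflexivity.
    rewrite rsum_const. unfold rsum; simpl; ring.
  - rewrite rsum_S, IHd. rewrite <- rsum_plus. apply rsum_ext. intros; rewrite rsum_S; reflexivity.
Qed.

Lemma rsum_shift g c lo cnt : rsum (fun j => g (j + c)%nat) lo cnt = rsum g (lo + c) cnt.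
Proof.
  revert lo; induction cnt; intros lo; [reflexivity|].
  rewrite !rsum_S, IHcnt. reflexivity.
Qed.

Lemma rsum_rot1 h lo cnt : (1 <= cnt)%nat -> h (lo + cnt)%nat = h lo ->
  rsum h (S lo) cnt = rsum h lo cnt.
Proof.
  intros H1 H2. destruct cnt as [|c]; [lia|].
  rewrite (rsum_S h lo c).
  replace (rsum h (S lo) (S c)) with (rsum h (S lo) (c + 1)) by (f_equal; lia).
  rewrite rsum_app. unfold rsum at 2. simpl.
  replace (S (lo + c)) with (lo + S c)%nat by lia.
  rewrite H2. ring.
Qed.

Lemma rsum_rot h cnt : (1 <= cnt)%nat -> forall c lo,
  (forall j, (lo <= j < lo + c)%nat -> h (j + cnt)%nat = h j) ->
  rsum h (lo + c) cnt = rsum h lo cnt.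
Proof.
  intros H1 c; induction c; intros lo H.
  - rewrite Nat.add_0_r; reflexivity.
  - replace (lo + S c)%nat with (S (lo + c)) by lia.
    rewrite rsum_rot1 by (auto; apply H; lia).
    apply IHc. intros; apply H; lia.
Qed.

Lemma core n m f k : (2 <= n)%nat -> (forall i, m (i + n)%nat = m i) -> (1 <= k <= n)%nat ->
  (exists C, forall k', (1 <= k' <= n)%nat -> rsum (fun i => m (i + k')%nat * f i) 1 (n - 1) = C) ->
  rsum (fun i => (m (i + k)%nat - rsum m 1 n / INR n) * f i) 1 (n - 1) = 0.
Proof.
  intros Hn Hp Hk [C HC].
  set (M := rsum m 1 n).
  assert (E1 : rsum (fun k' => rsum (fun i => m (i + k')%nat * f i) 1 (n - 1)) 1 n = INR n * C).
  { rewrite <- rsum_const with (lo := 1%nat). apply rsum_ext. intros; apply HC; lia. }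
  rewrite rsum_swap in E1.
  assert (E2 : rsum (fun i => rsum (fun k' => m (i + k')%nat * f i) 1 n) 1 (n - 1)
              = M * rsum f 1 (n - 1)).
  { rewrite <- rsum_scal. apply rsum_ext. intros i Hi.
    rewrite rsum_scalr. f_equal.
    rewrite (rsum_ext _ (fun k' => m (k' + i)%nat)) by (intros; rewrite Nat.add_comm; reflexivity).
    rewrite rsum_shift. apply rsum_rot; [lia|]. intros; apply Hp. }
  rewrite E2 in E1.
  assert (Hn0 : INR n <> 0) by (apply not_0_INR; lia).
  assert (EC : C = M / INR n * rsum f 1 (n - 1)).
  { apply Rmult_eq_reg_l with (INR n); auto. rewrite <- E1. field. auto. }
  rewrite (rsum_ext _ (fun i => m (i + k)%nat * f i + (- (M / INR n)) * f i))
    by (intros; ring).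
  rewrite rsum_plus, rsum_scal, HC by lia. rewrite EC. ring.
Qed.

Lemma reindex n m k s (g : R -> R) : (2 <= n)%nat -> (1 <= k <= n)%nat ->
  (forall i, m (i + n)%nat = m i) -> (forall x, g (x + INR n) = g x) ->
  rsum (fun j => if Nat.eqb j k then 0 else m j * g (s - INR k + INR j)) 1 n
  = rsum (fun i => m (i + k)%nat * g (s + INR i)) 1 (n - 1).
Proof.
  intros Hn Hk Hm Hg.
  set (h := fun j => if (Nat.eqb j k || Nat.eqb j (k + n))%bool then 0
                     else m j * g (s - INR k + INR j)).
  rewrite (rsum_ext _ h).
  2:{ intros j Hj. unfold h. destruct (Nat.eqb_spec j k); destruct (Nat.eqb_spec j (k + n));
      simpl; try lia; reflexivity. }
  rewrite <- (rsum_rot h n ltac:(lia) (k - 1) 1).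
  2:{ intros j Hj. unfold h. destruct (Nat.eqb_spec j k); destruct (Nat.eqb_spec j (k + n));
      destruct (Nat.eqb_spec (j + n) k); destruct (Nat.eqb_spec (j + n) (k + n));
      simpl; try lia. rewrite Hm, plus_INR.
      replace (s - INR k + (INR j + INR n)) with ((s - INR k + INR j) + INR n) by ring.
      rewrite Hg. reflexivity. }
  replace (1 + (k - 1))%nat with k by lia.
  replace n with (S (n - 1)) at 1 by lia.
  rewrite rsum_S.
  assert (h k = 0) as ->. { unfold h. rewrite Nat.eqb_refl. reflexivity. }
  rewrite Rplus_0_l.
  replace (S k) with (1 + k)%nat by lia. rewrite <- rsum_shift.
  apply rsum_ext. intros i Hi. unfold h.
  destruct (Nat.eqb_spec (i + k) k); destruct (Nat.eqb_spec (i + k) (k + n)); simpl; try lia.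
  rewrite plus_INR. f_equal. f_equal. ring.
Qed.

Lemma vsum_comp (cc : V3 -> R) :
  (forall x y, cc (vadd x y) = cc x + cc y) -> cc vzero = 0 ->
  forall f lo cnt, cc (vsum f lo cnt) = rsum (fun j => cc (f j)) lo cnt.
Proof.
  intros Ha H0 f lo cnt. revert lo; induction cnt; intros lo; [exact H0|].
  change (cc (vadd (f lo) (vsum f (S lo) cnt)) = rsum (fun j => cc (f j)) lo (S cnt)).
  rewrite Ha, IHcnt. reflexivity.
Qed.

Lemma V3ext (x y : V3) : c1 x = c1 y -> c2 x = c2 y -> c3 x = c3 y -> x = y.
Proof.
  destruct x as [[a b] c], y as [[a' b'] c']; unfold c1, c2, c3; simpl; intros -> -> ->; reflexivity.
Qed.

Theorem lemma3 (sigma : R) (n : nat) (m : nat -> R) (p : R -> V3) :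
  (sigma = 1 \/ sigma = -1) ->
  (2 <= n)%nat ->
  (forall i, (1 <= i <= n)%nat -> 0 < m i) ->
  (* cyclic indexing of the masses: m_{k + K n} = m_k *)
  (forall i, m (i + n)%nat = m i) ->
  C2_curve p ->
  (forall t, on_M2 sigma (p t)) ->
  (forall t, p (t + INR n) = p t) ->
  (* no collisions: the denominators of the equations are nonzero *)
  (forall t j k, (1 <= j <= n)%nat -> (1 <= k <= n)%nat -> j <> k ->
     den sigma (qk p k t) (qk p j t) <> 0) ->
  is_solution sigma n m p ->
  let M := rsum m 1 n in
  forall k, (1 <= k <= n)%nat -> forall t,
    vsum (fun j => vscale (m (j + k)%nat - M / INR n) (force sigma (p t) (p (t + INR j))))
         1 (n - 1) = vzero.
Proof.
  intros Hs Hn Hm Hper HC2 HM2 Hpp Hden Hsol M k Hk t.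
  assert (Hkey : forall cc : V3 -> R, (forall x y, cc (vadd x y) = cc x + cc y) ->
     (forall a x, cc (vscale a x) = a * cc x) -> cc vzero = 0 ->
     rsum (fun i => (m (i + k)%nat - M / INR n) * cc (force sigma (p t) (p (t + INR i)))) 1 (n - 1) = 0).
  { intros cc Ha Hsc H0. apply core; auto.
    exists (cc (acc p t) + sigma * odot sigma (vel p t) (vel p t) * cc (p t)).
    intros k' Hk'.
    pose proof (Hsol k' Hk' (t - INR k')) as E.
    unfold qk in E. rewrite acc_shift, vel_shift in E.
    assert (e : t - INR k' + INR k' = t) by ring. rewrite e in E.
    apply (f_equal cc) in E. unfold vsub in E. rewrite Ha, Hsc, Hsc, vsum_comp in E by auto.
    rewrite (rsum_ext _ (fun j => if Nat.eqb j k' then 0 else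
        m j * (fun x => cc (force sigma (p t) (p x))) (t - INR k' + INR j))) in E.
    2:{ intros j _. destruct (Nat.eqb j k'); auto. }
    pose proof (reindex n m k' t (fun x => cc (force sigma (p t) (p x))) Hn Hk' Hper) as R1.
    cbv beta in R1. rewrite R1 in E.
    2:{ intros x. rewrite Hpp. reflexivity. }
    rewrite E. ring. }
  apply V3ext.
  - rewrite vsum_comp by reflexivity. change (c1 vzero) with 0. rewrite <- (Hkey c1) by reflexivity.
    apply rsum_ext. intros; reflexivity.
  - rewrite vsum_comp by reflexivity. change (c2 vzero) with 0. rewrite <- (Hkey c2) by reflexivity.
    apply rsum_ext. intros; reflexivity.
  - rewrite vsum_comp by reflexivity. change (c3 vzero) with 0. rewrite <- (Hkey c3) by reflexivity.
    apply rsum_ext. intros; reflexivity.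
Qed.
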